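(* On the triangle graph on $\{0,1,2\}$ over $\mathbb{F}_2$, let $\nabla$ be the curved QLC determined by $\nabla e^+=e^-\otimes e^-$, $\nabla e^-=e^+\otimes e^+$, viewed as a map $P(\mathrm{Arr})\to P(\mathrm{Arr}^{(2)})$. Define its de Morgan dual connection by $\bar\nabla\omega=\mathrm{Arr}^{(2)}\setminus\nabla(\mathrm{Arr}\setminus\omega)$. Then $\bar\nabla\omega=\nabla\omega\oplus g$ for all $\omega\subseteq\mathrm{Arr}$, where $g=\{0\to1\to0,\ 0\to2\to0,\ 1\to0\to1,\ 1\to2\to1,\ 2\to0\to2,\ 2\to1\to2\}$ is the quantum metric.
   Context: $A=\mathbb{F}_2(\{0,1,2\})$; $\mathrm{Arr}=\{i\to j: i\ne j\}$ (all six arrows), $\mathrm{Arr}^{(2)}$ the set of 2-step paths $x\to y\to z$ along arrows. Over $\mathbb{F}_2$, 1-forms are identified with subsets of $\mathrm{Arr}$ (sum = symmetric difference $\oplus$) and $\Omega^1\otimes_A\Omega^1$ with subsets of $\mathrm{Arr}^{(2)}$, where $(x\to y)\otimes(y'\to z)$ is the path $x\to y\to z$ if $y=y'$ and $0=\emptyset$ otherwise. The bimodule structure is $f\cdot(x\to y)\cdot h=f(x)h(y)(x\to y)$ and ${\rm d} f=\sum_{x\to y}(f(y)+f(x))x\to y$. $e^+=\{0\to1,1\to2,2\to0\}$, $e^-=\{1\to0,2\to1,0\to2\}$. The connection is extended from $e^\pm$ to all 1-forms by $\nabla(f\omega)={\rm d} f\otimes\omega+f\nabla\omega$ (it is additive).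 *)

(* Defs.v *)
(* F_2 is modelled by bool with xor (addb); subsets by {set _}. *)
From mathcomp Require Import all_boot.
Set Implicit Arguments. Unset Strict Implicit. Unset Printing Implicit Defensive.

Definition V := 'I_3.
Definition arrow := {p : V * V | p.1 != p.2}.
Definition src (a : arrow) : V := (val a).1.
Definition tgt (a : arrow) : V := (val a).2.
Definition path2 := {t : V * V * V | (t.1.1 != t.1.2) && (t.1.2 != t.2)}.
Definition p0 (p : path2) : V := (val p).1.1.
Definition p1 (p : path2) : V := (val p).1.2.
Definition p2 (p : path2) : V := (val p).2.

Definition fn := V -> bool.

(* sum over F_2 = symmetric difference *)
Definition symdiff (T : finType) (A B : {set T}) : {set T} := (A :\: B) :|: (B :\: A).

Definition inA (w : {set arrow}) (x y : V) : bool :=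
  [exists a in w, (src a == x) && (tgt a == y)].

(* (x->y) (x) (y'->z) = x->y->z if y = y', else 0; extended bilinearly *)
Definition tens (w u : {set arrow}) : {set path2} :=
  [set p : path2 | inA w (p0 p) (p1 p) && inA u (p1 p) (p2 p)].

Definition lact1 (f : fn) (w : {set arrow}) : {set arrow} := [set a in w | f (src a)].
Definition lact2 (f : fn) (T : {set path2}) : {set path2} := [set p in T | f (p0 p)].

Definition dA (f : fn) : {set arrow} := [set a : arrow | f (tgt a) (+) f (src a)].

Definition eplus : {set arrow} :=
  [set a : arrow | (nat_of_ord (src a), nat_of_ord (tgt a)) \in [:: (0,1); (1,2); (2,0)]].
Definition eminus : {set arrow} :=
  [set a : arrow | (nat_of_ord (src a), nat_of_ord (tgt a)) \in [:: (1,0); (2,1); (0,2)]].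

Definition nabla_eplus : {set path2} := tens eminus eminus.
Definition nabla_eminus : {set path2} := tens eplus eplus.

(* coefficients of a 1-form w = f.e^+ + h.e^- (e^+, e^- partition Arr and
   each contains exactly one arrow out of every vertex) *)
Definition coef (e w : {set arrow}) : fn := fun x => [exists a in w, (a \in e) && (src a == x)].

(* Leibniz extension: nabla (f e) = d f (x) e + f nabla e, and additivity *)
Definition nabla (w : {set arrow}) : {set path2} :=
  symdiff
    (symdiff (tens (dA (coef eplus w)) eplus) (lact2 (coef eplus w) nabla_eplus))
    (symdiff (tens (dA (coef eminus w)) eminus) (lact2 (coef eminus w) nabla_eminus)).

Definition nablabar (w : {set arrow}) : {set path2} := ~: nabla (~: w).

Definition gmetric : {set path2} := [set p : path2 | p0 p == p2 p].

(* Main.v *)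
Require Import Defs.
From mathcomp Require Import all_boot.
Set Implicit Arguments. Unset Strict Implicit.

Definition mk (x y : V) (H : x != y) : arrow :=
  exist (fun p : V * V => p.1 != p.2) (x, y) H.

Lemma inA_mk w x y (H : x != y) : inA w x y = (mk H \in w).
Proof.
apply/existsP/idP => [[a /andP[aw /andP[/eqP ax /eqP ay]]]|h].
  have -> : mk H = a.
    apply: val_inj; rewrite /= -ax -ay; by case: a {aw ax ay} => [[u v] h].
  exact: aw.
by exists (mk H); rewrite h /src /tgt /= !eqxx.
Qed.

Lemma mem_sd (T : finType) (A B : {set T}) x :
  (x \in symdiff A B) = (x \in A) (+) (x \in B).
Proof. by rewrite !inE; case: (x \in A); case: (x \in B). Qed.

Lemma p01 (p : path2) : p0 p != p1 p.
Proof. by case/andP: (valP p). Qed.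
Lemma p12 (p : path2) : p1 p != p2 p.
Proof. by case/andP: (valP p). Qed.

Lemma inA_dA (f : fn) (p : path2) : inA (dA f) (p0 p) (p1 p) = f (p1 p) (+) f (p0 p).
Proof. by rewrite (inA_mk _ (p01 p)) inE. Qed.

Lemma coef_neg (e w : {set arrow}) (x : V) :
  (exists a, forall b, ((b \in e) && (src b == x)) = (b == a)) ->
  coef e (~: w) x = ~~ coef e w x.
Proof.
case=> a Ha.
have E : forall u, coef e u x = (a \in u).
  move=> u; rewrite /coef; apply/existsP/idP => [[b /andP[bu]]|au].
    by rewrite Ha => /eqP <-.
  by exists a; rewrite au Ha eqxx.
by rewrite !E inE.
Qed.

Lemma ex_plus (x : V) : exists a, forall b, ((b \in eplus) && (src b == x)) = (b == a).
Proof.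
case: x => [[|[|[|m]]] Hx] //.
- exists (@mk (Ordinal Hx) (@Ordinal 3 1 isT) isT).
  case=> [[u v] huv]; case: u huv => [[|[|[|u]]] hu] //; case: v => [[|[|[|v]]] hv] // huv;
  by rewrite inE.
- exists (@mk (Ordinal Hx) (@Ordinal 3 2 isT) isT).
  case=> [[u v] huv]; case: u huv => [[|[|[|u]]] hu] //; case: v => [[|[|[|v]]] hv] // huv;
  by rewrite inE.
- exists (@mk (Ordinal Hx) (@Ordinal 3 0 isT) isT).
  case=> [[u v] huv]; case: u huv => [[|[|[|u]]] hu] //; case: v => [[|[|[|v]]] hv] // huv;
  by rewrite inE.
Qed.

Lemma ex_minus (x : V) : exists a, forall b, ((b \in eminus) && (src b == x)) = (b == a).
Proof.
case: x => [[|[|[|m]]] Hx] //.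
- exists (@mk (Ordinal Hx) (@Ordinal 3 2 isT) isT).
  case=> [[u v] huv]; case: u huv => [[|[|[|u]]] hu] //; case: v => [[|[|[|v]]] hv] // huv;
  by rewrite inE.
- exists (@mk (Ordinal Hx) (@Ordinal 3 0 isT) isT).
  case=> [[u v] huv]; case: u huv => [[|[|[|u]]] hu] //; case: v => [[|[|[|v]]] hv] // huv;
  by rewrite inE.
- exists (@mk (Ordinal Hx) (@Ordinal 3 1 isT) isT).
  case=> [[u v] huv]; case: u huv => [[|[|[|u]]] hu] //; case: v => [[|[|[|v]]] hv] // huv;
  by rewrite inE.
Qed.

Lemma K (p : path2) :
  (inA eminus (p0 p) (p1 p) && inA eminus (p1 p) (p2 p))
    (+) (inA eplus (p0 p) (p1 p) && inA eplus (p1 p) (p2 p)) = (p0 p != p2 p).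
Proof.
case: p => [[[x y] z] hp]; rewrite /p0 /p1 /p2 /=.
have /andP[/= hxy hyz] := hp.
rewrite !(inA_mk _ hxy) !(inA_mk _ hyz) !inE /=.
move: hxy hyz {hp}.
case: x => [[|[|[|x]]] hx] //; case: y => [[|[|[|y]]] hy] //;
case: z => [[|[|[|z]]] hz] //.
Qed.

Theorem lemma4p9 (w : {set arrow}) : nablabar w = symdiff (nabla w) gmetric.
Proof.
apply/setP => p.
rewrite /nablabar /nabla /symdiff /nabla_eplus /nabla_eminus !inE !inA_dA.
rewrite !(coef_neg _ (ex_plus _)) !(coef_neg _ (ex_minus _)).
move: (K p).
do 4 case: (coef _ w _); do 4 case: (inA _ _ _); by case: (_ == _).
Qed.
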